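(* Let $p$ be a prime and let $\mathcal{F}$ be a linear, affine-invariant family of functions $\mathbb{F}_p^n\to\mathbb{F}_p$. Suppose $x^e\in\mathcal{F}$ for some $e\in\{0,\dots,p-1\}^n$. Then $x^{e'}\in\mathcal{F}$ for every $e'\in\{0,\dots,p-1\}^n$ with $|e'|_1\leq|e|_1$.
   Context: For $e\in\{0,\dots,p-1\}^n$, $x^e$ denotes the function $x\mapsto\prod_{i=1}^n x_i^{e_i}$ on $\mathbb{F}_p^n$ (with $0^0=1$), and $|e|_1=\sum_i e_i$. A family $\mathcal{F}$ of functions $\mathbb{F}_p^n\to\mathbb{F}_p$ is linear if it contains the zero function and is closed under $\mathbb{F}_p$-linear combinations; it is affine-invariant if $f\circ T\in\mathcal{F}$ whenever $f\in\mathcal{F}$ and $T:\mathbb{F}_p^n\to\mathbb{F}_p^n$ is an affine transformation. *)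

(* Defs.v *)
From mathcomp Require Import all_boot all_order all_algebra.
Set Implicit Arguments. Unset Strict Implicit. Unset Printing Implicit Defensive.
Import GRing.Theory.
Local Open Scope ring_scope.

Definition fn (p n : nat) := 'rV['F_p]_n -> 'F_p.

Definition linear_family (p n : nat) (F : fn p n -> Prop) : Prop :=
  F (fun _ => 0) /\
  (forall (a b : 'F_p) (f g : fn p n), F f -> F g -> F (fun x => a * f x + b * g x)).

Definition affine_map (p n : nat) (A : 'M['F_p]_n) (b : 'rV['F_p]_n)
  : 'rV['F_p]_n -> 'rV['F_p]_n := fun x => x *m A + b.

Definition affine_invariant (p n : nat) (F : fn p n -> Prop) : Prop :=
  forall (f : fn p n) (A : 'M['F_p]_n) (b : 'rV['F_p]_n),
    F f -> F (fun x => f (affine_map A b x)).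

(* Exponent vectors e in {0,...,p-1}^n and monomials x^e (0^0 = 1). *)
Definition monomial (p n : nat) (e : 'I_n -> 'I_p) : fn p n :=
  fun x => \prod_(i < n) x ord0 i ^+ e i.

Definition l1norm (p n : nat) (e : 'I_n -> 'I_p) : nat :=
  (\sum_(i < n) nat_of_ord (e i))%N.

(* Main.v *)
From mathcomp Require Import all_boot all_order all_algebra all_field.
From mathcomp Require Import zify ring.
From Stdlib Require Import FunctionalExtensionality.
Require Import Defs.
Set Implicit Arguments. Unset Strict Implicit. Unset Printing Implicit Defensive.
Import GRing.Theory.
Local Open Scope ring_scope.

Lemma fermat (p : nat) (pp : prime p) (x : 'F_p) : x != 0 -> x ^+ (p.-1) = 1.
Proof.
move=> nx.
have := expf_card x; rewrite card_Fp // => H.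
have p0 : (0 < p)%N by apply: prime_gt0.
apply: (mulfI nx); rewrite mulr1 -exprS prednK //.
Qed.

Lemma powp1 (p : nat) (pp : prime p) (x : 'F_p) :
  x ^+ (p.-1) = if x == 0 then 0 else 1.
Proof.
case: eqP => [->|/eqP nx]; last exact: fermat.
rewrite expr0n; have := prime_gt1 pp; case: (p) => [|[|q]] //.
Qed.

Lemma lagr (p : nat) (pp : prime p) (k : nat) : (k < p)%N ->
  \sum_(t : 'F_p) t ^+ k *: (1 - ('X - t%:P) ^+ p.-1) = 'X^k.
Proof.
move=> kp.
apply/eqP; rewrite -subr_eq0; apply/eqP.
apply/eqP/negPn/negP => nD.
have p0 : (0 < p)%N by apply: prime_gt0.
have sD : (size (\sum_(t : 'F_p) t ^+ k *: (1 - ('X - t%:P) ^+ p.-1) - 'X^k)%R <= p)%N.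
  apply: leq_trans (size_polyD _ _) _; rewrite geq_max size_polyN size_polyXn kp andbT.
  apply: (big_ind (fun q : {poly 'F_p} => size q <= p)%N) => //.
  - by rewrite size_poly0.
  - by move=> q r hq hr; apply: leq_trans (size_polyD _ _) _; rewrite geq_max hq hr.
  move=> t _; apply: leq_trans (size_scale_leq _ _) _.
  apply: leq_trans (size_polyD _ _) _; rewrite geq_max size_polyN size_exp_XsubC prednK //.
  by rewrite size_poly1 p0 leqnn.
have Hall : all (root (\sum_(t : 'F_p) t ^+ k *: (1 - ('X - t%:P) ^+ p.-1) - 'X^k)) (enum 'F_p).
  apply/allP => s _; rewrite /root !hornerE horner_sum.
  rewrite (bigD1 s) //= big1 ?addr0.
    by rewrite !hornerE subrr powp1 // eqxx subr0 mulr1 subrr.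
  move=> t ts; rewrite !hornerE powp1 // subr_eq0 eq_sym (negbTE ts) subrr mulr0 //.
have := max_poly_roots nD Hall (enum_uniq 'F_p).
by rewrite -cardE card_Fp // ltnNge sD.
Qed.

Lemma lambda_ex (p : nat) (pp : prime p) (m : nat) :
  exists lam : 'F_p -> 'F_p, forall k, (k < p)%N ->
    \sum_(t : 'F_p) lam t * t ^+ k = (k == m)%:R.
Proof.
exists (fun t => (1 - ('X - t%:P) ^+ p.-1)`_m) => k kp.
rewrite eq_sym -coefXn -(lagr pp kp) coef_sum; apply: eq_bigr => t _.
by rewrite coefZ mulrC.
Qed.

Definition setc (p n : nat) (i : 'I_n) (v : 'F_p) (x : 'rV['F_p]_n) : 'rV['F_p]_n :=
  \row_l (if l == i then v else x ord0 l).

Lemma setcE (p n : nat) (i : 'I_n) (v : 'F_p) x l :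
  setc i v x ord0 l = if l == i then v else x ord0 l.
Proof. by rewrite /setc mxE. Qed.

Lemma comb (p n : nat) (F : fn p n -> Prop) (Flin : linear_family F)
  (T : Type) (s : seq T) (lam : T -> 'F_p) (f : T -> fn p n) :
  (forall t, F (f t)) -> F (fun x => \sum_(t <- s) lam t * f t x).
Proof.
case: Flin => F0 Fc hf; elim: s => [|a s IH].
  have -> : (fun x => \sum_(t <- [::]) lam t * f t x) = (fun _ => 0) .
    by apply: functional_extensionality => x; rewrite big_nil.
  exact: F0.
have -> : (fun x => \sum_(t <- a :: s) lam t * f t x) =
   (fun x => lam a * f a x + 1 * (\sum_(t <- s) lam t * f t x)).
  by apply: functional_extensionality => x; rewrite big_cons mul1r.
exact: Fc.
Qed.

Lemma subst (p n : nat) (F : fn p n -> Prop) (Faff : affine_invariant F)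
  (i : 'I_n) (w : 'I_n -> 'F_p) (g : 'F_p) (v : fn p n)
  (hv : forall x, v x = \sum_k x ord0 k * w k + g) (f : fn p n) :
  F f -> F (fun x => f (setc i (v x) x)).
Proof.
move=> Ff.
pose A : 'M['F_p]_n := \matrix_(k, l) (if l == i then w k else (k == l)%:R).
pose b : 'rV['F_p]_n := g *: delta_mx ord0 i.
have -> : (fun x => f (setc i (v x) x)) = (fun x => f (affine_map A b x)).
  apply: functional_extensionality => x; congr f.
  apply/rowP => l; rewrite setcE /affine_map /A /b !mxE hv.
  case: eqP => [->|/eqP li].
    rewrite eqxx mulr1; congr (_ + _); apply: eq_bigr => k _; rewrite !mxE eqxx //.
  rewrite mulr0 addr0 (bigD1 l) //= big1 ?addr0.
    by rewrite !mxE (negbTE li) eqxx mulr1.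
  by move=> k kl; rewrite !mxE (negbTE li) (negbTE kl) mulr0.
exact: Faff.
Qed.

Lemma sep (p n : nat) (pp : prime p) (F : fn p n -> Prop)
  (Flin : linear_family F) (Faff : affine_invariant F)
  (i : 'I_n) (c : nat -> fn p n) (hc : forall k v x, c k (setc i v x) = c k x) :
  F (fun x => \sum_(k < p) x ord0 i ^+ k * c k x) ->
  forall m, (m < p)%N -> F (fun x => x ord0 i ^+ m * c m x).
Proof.
move=> Ff m mp.
have [lam hlam] := lambda_ex pp m.
pose f := (fun x : 'rV['F_p]_n => \sum_(k < p) x ord0 i ^+ k * c k x).
have Ft : forall t : 'F_p, F (fun x => f (setc i (t * x ord0 i) x)).
  move=> t; apply: (@subst p n F Faff i (fun k => if k == i then t else 0) 0 (fun x => t * x ord0 i)) => //.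
  move=> x; rewrite addr0 (bigD1 i) //= big1 ?addr0 ?eqxx; first by rewrite mulrC.
  by move=> k /negbTE ->; rewrite mulr0.
have := comb Flin (index_enum 'F_p) lam Ft.
have -> // : (fun x : 'rV['F_p]_n => \sum_(t <- index_enum 'F_p) lam t * f (setc i (t * x ord0 i) x))
   = (fun x => x ord0 i ^+ m * c m x).
apply: functional_extensionality => x.
rewrite /f.
under eq_bigr => t _ do rewrite big_distrr /=.
rewrite exchange_big /=.
rewrite (bigD1 (Ordinal mp)) //= [X in _ + X]big1 ?addr0.
  have h1 : \sum_(t : 'F_p) lam t * t ^+ m = 1 by rewrite hlam // eqxx.
  rewrite -[RHS]mul1r -h1 mulr_suml; apply: eq_bigr => t _.
  by rewrite setcE eqxx hc exprMn !mulrA.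
move=> k /eqP km.
have km' : (k : nat) != m by apply/eqP => h; apply: km; apply: val_inj.
have h0 : \sum_(t : 'F_p) lam t * t ^+ k = 0 by rewrite hlam // (negbTE km').
transitivity ((\sum_(t : 'F_p) lam t * t ^+ k) * (x ord0 i ^+ k * c k x)); last by rewrite h0 mul0r.
rewrite mulr_suml; apply: eq_bigr => t _.
by rewrite setcE eqxx hc exprMn !mulrA.
Qed.

Definition Rm (p n : nat) (e : 'I_n -> 'I_p) (i : 'I_n) (x : 'rV['F_p]_n) : 'F_p :=
  \prod_(k | k != i) x ord0 k ^+ e k.

Lemma monoE (p n : nat) (e : 'I_n -> 'I_p) (i : 'I_n) x :
  monomial e x = x ord0 i ^+ e i * Rm e i x.
Proof. by rewrite /monomial (bigD1 i). Qed.

Lemma Rm_setc (p n : nat) (e : 'I_n -> 'I_p) (i : 'I_n) v x :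
  Rm e i (setc i v x) = Rm e i x.
Proof. by apply: eq_bigr => k ki; rewrite setcE (negbTE ki). Qed.

Lemma Rm_eq (p n : nat) (e e2 : 'I_n -> 'I_p) (i : 'I_n) x :
  (forall k, k != i -> (e k : nat) = e2 k) -> Rm e i x = Rm e2 i x.
Proof. by move=> h; apply: eq_bigr => k ki; rewrite h. Qed.

Lemma natr_Fp_neq0 (p : nat) (pp : prime p) (a : nat) :
  (0 < a < p)%N -> (a%:R : 'F_p) != 0.
Proof.
move=> /andP [a0 ap]; apply/eqP => h.
have := val_Fp_nat pp a; rewrite h modn_small //= => h2.
by move: a0; rewrite -h2.
Qed.

Lemma shift (p n : nat) (pp : prime p) (F : fn p n -> Prop)
  (Flin : linear_family F) (Faff : affine_invariant F)
  (e : 'I_n -> 'I_p) (i : 'I_n) (hi : (0 < e i)%N)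
  (w : 'I_n -> 'F_p) (g : 'F_p) (wi : w i = 0) :
  F (monomial e) ->
  F (fun x => x ord0 i ^+ (e i).-1 * ((\sum_k x ord0 k * w k + g) * Rm e i x)).
Proof.
move=> Fe.
pose u := fun x : 'rV['F_p]_n => \sum_k x ord0 k * w k + g.
have uS : forall v x, u (setc i v x) = u x.
  move=> v x; rewrite /u; congr (_ + _); apply: eq_bigr => k _.
  rewrite setcE; case: eqP => [->|//]; by rewrite wi !mulr0.
have Fg : F (fun x : 'rV['F_p]_n => monomial e (setc i (u x + x ord0 i) x)).
  apply: (@subst p n F Faff i (fun k => w k + (k == i)%:R) g) => // x.
  rewrite /u; under [in RHS]eq_bigr => k _ do rewrite mulrDr.
  rewrite big_split /= -!addrA; congr (_ + _); rewrite addrC; congr (_ + _).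
  rewrite (bigD1 i) //= big1 ?addr0 ?eqxx ?mulr1 //.
  by move=> k /negbTE ->; rewrite mulr0.
set a := nat_of_ord (e i).
have ap : (a < p)%N by apply: ltn_ord.
pose c := fun (k : nat) (x : 'rV['F_p]_n) => ('C(a, k))%:R * u x ^+ (a - k) * Rm e i x.
have cS : forall k v x, c k (setc i v x) = c k x.
  by move=> k v x; rewrite /c uS Rm_setc.
have Fs : F (fun x : 'rV['F_p]_n => \sum_(k < p) x ord0 i ^+ k * c k x).
  have -> : (fun x : 'rV['F_p]_n => \sum_(k < p) x ord0 i ^+ k * c k x) =
            (fun x : 'rV['F_p]_n => monomial e (setc i (u x + x ord0 i) x)) => //.
  apply: functional_extensionality => x.
  rewrite (monoE e i) Rm_setc setcE eqxx exprDn.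
  rewrite (big_ord_widen _ (fun k => u x ^+ (a - k) * x ord0 i ^+ k *+ 'C(a, k)) ap).
  rewrite mulr_suml [RHS]big_mkcond; apply: eq_bigr => k _.
  case: ifP => kl.
    by rewrite /c -mulr_natr; ring.
  by rewrite /c bin_small ?mulr0n ?mul0r ?mulr0 // ltnNge -ltnS kl.
have := sep pp Flin Faff cS Fs (leq_ltn_trans (leq_pred a) ap).
have an0 : (a%:R : 'F_p) != 0 by apply: natr_Fp_neq0 => //; rewrite hi ap.
case: Flin => _ Fc => Fm.
have := Fc (a%:R)^-1 0 _ _ Fm Fm.
have -> // : (fun x : 'rV['F_p]_n => (a%:R)^-1 * (x ord0 i ^+ a.-1 * c a.-1 x) + 0 * (x ord0 i ^+ a.-1 * c a.-1 x))
   = (fun x : 'rV['F_p]_n => x ord0 i ^+ (e i).-1 * ((\sum_k x ord0 k * w k + g) * Rm e i x)).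
apply: functional_extensionality => x.
rewrite /c -subn1 bin_sub ?bin1 // subKn // expr1 mul0r addr0 /u.
by rewrite mulrCA; congr (_ * _); rewrite -mulrA mulKf.
Qed.

Lemma lower (p n : nat) (pp : prime p) (F : fn p n -> Prop)
  (Flin : linear_family F) (Faff : affine_invariant F)
  (e e2 : 'I_n -> 'I_p) (i : 'I_n) (hi : (0 < e i)%N)
  (h2 : (e2 i : nat) = (e i).-1) (h3 : forall k, k != i -> (e k : nat) = e2 k) :
  F (monomial e) -> F (monomial e2).
Proof.
move=> Fe; have := @shift p n pp F Flin Faff e i hi (fun _ => 0) 1 erefl Fe.
have -> // : (fun x : 'rV['F_p]_n => x ord0 i ^+ (e i).-1 *
   ((\sum_k x ord0 k * 0 + 1) * Rm e i x)) = monomial e2.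
apply: functional_extensionality => x.
rewrite (monoE e2 i) h2 (Rm_eq x h3) big1 ?add0r ?mul1r // => k _; exact: mulr0.
Qed.

Lemma move (p n : nat) (pp : prime p) (F : fn p n -> Prop)
  (Flin : linear_family F) (Faff : affine_invariant F)
  (e e2 : 'I_n -> 'I_p) (i j : 'I_n) (ij : i != j) (hi : (0 < e i)%N)
  (h2 : (e2 i : nat) = (e i).-1) (h2j : (e2 j : nat) = (e j).+1)
  (h3 : forall k, k != i -> k != j -> (e k : nat) = e2 k) :
  F (monomial e) -> F (monomial e2).
Proof.
move=> Fe.
have wi : ((i == j)%:R : 'F_p) = 0 by rewrite (negbTE ij).
have := @shift p n pp F Flin Faff e i hi (fun k => (k == j)%:R) 0 wi Fe.
have -> // : (fun x : 'rV['F_p]_n => x ord0 i ^+ (e i).-1 *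
   ((\sum_k x ord0 k * (k == j)%:R + 0) * Rm e i x)) = monomial e2.
apply: functional_extensionality => x.
rewrite (monoE e2 i) h2 addr0; congr (_ * _).
have ji : j != i by rewrite eq_sym.
rewrite (bigD1 j) //= big1 ?addr0; last first.
  by move=> k /negbTE ->; rewrite mulr0.
rewrite eqxx mulr1 /Rm (bigD1 j ji) [in RHS](bigD1 j ji) /= h2j exprS -mulrA.
congr (_ * (_ * _)); apply: eq_bigr => k /andP [ki kj]; by rewrite h3.
Qed.

Local Close Scope ring_scope.

Lemma sum_upd (n : nat) (a b : 'I_n -> nat) (i : 'I_n) :
  (forall k, k != i -> a k = b k) -> (\sum_(k < n) a k + b i = \sum_(k < n) b k + a i)%N.
Proof.
move=> h; rewrite [\sum_(k < n) a k](bigD1 i) // [\sum_(k < n) b k](bigD1 i) //=.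
rewrite (eq_bigr b); last by move=> k ki; exact: h.
lia.
Qed.

Lemma sum_lt (n : nat) (a b : 'I_n -> nat) (j : 'I_n) :
  (forall k, a k <= b k)%N -> (a j < b j)%N -> (\sum_(k < n) a k < \sum_(k < n) b k)%N.
Proof.
move=> h hj; rewrite [\sum_(k < n) a k](bigD1 j) // [\sum_(k < n) b k](bigD1 j) //=.
rewrite -addSn leq_add // leq_sum // => k _.
Qed.

Lemma sum_upd2 (n : nat) (a b : 'I_n -> nat) (i j : 'I_n) : i != j ->
  (forall k, k != i -> k != j -> a k = b k) ->
  \sum_(k < n) a k + b i + b j = \sum_(k < n) b k + a i + a j.
Proof.
move=> ij h.
pose c := fun k => if k == i then b i else a k.
have h1 := @sum_upd n a c i (fun k (ki : k != i) => ltac:(by rewrite /c (negbTE ki))).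
have h2 : forall k, k != j -> c k = b k.
  move=> k kj; rewrite /c; case: eqP => [->//|/eqP ki]; exact: h.
have h3 := @sum_upd n c b j h2.
have ci : c i = b i by rewrite /c eqxx.
have cj : c j = a j by rewrite /c eq_sym (negbTE ij).
lia.
Qed.

Definition mu (p n : nat) (e e' : 'I_n -> 'I_p) : nat :=
  \sum_(k < n) ((e k - e' k) + (e' k - e k)).

Lemma step (p n : nat) (pp : prime p) (F : fn p n -> Prop)
  (Flin : linear_family F) (Faff : affine_invariant F)
  (e e' : 'I_n -> 'I_p) (Fe : F (monomial e)) (hl : l1norm e' <= l1norm e) :
  (forall k, (e k : nat) = e' k) \/
  exists e2, [/\ F (monomial e2), l1norm e' <= l1norm e2 & mu e2 e' < mu e e'].
Proof.
case: (pickP (fun k => e' k < e k)) => [i /= hi | none].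
  have hi0 : 0 < e i by lia.
  have pi : (e i).-1 < p := leq_ltn_trans (leq_pred _) (ltn_ord _).
  have [lt|eq] : l1norm e' < l1norm e \/ l1norm e' = l1norm e by lia.
    right; pose e2 := fun k => if k == i then Ordinal pi else e k.
    have h2 : (e2 i : nat) = (e i).-1 by rewrite /e2 eqxx.
    have h3 : forall k, k != i -> (e k : nat) = e2 k by move=> k /negbTE; rewrite /e2 => ->.
    exists e2; split; first exact: (lower pp Flin Faff hi0 h2 h3).
      have := @sum_upd n (fun k => nat_of_ord (e2 k)) (fun k => nat_of_ord (e k)) i (fun k hk => esym (h3 k hk)).
      move: lt; rewrite /l1norm /=; lia.
    have := @sum_upd n (fun k => (e2 k - e' k) + (e' k - e2 k)) (fun k => (e k - e' k) + (e' k - e k)) i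
      (fun k hk => ltac:(by rewrite /= -(h3 k hk))).
    rewrite /mu /=; lia.
  case: (pickP (fun k => e k < e' k)) => [j /= hj | none2]; last first.
    have : l1norm e' < l1norm e.
      apply: (@sum_lt n (fun k => nat_of_ord (e' k)) (fun k => nat_of_ord (e k)) i) => // k.
      by move: (none2 k) => /= /negbT; rewrite -leqNgt.
    lia.
  have ij : i != j by apply/eqP => ij; subst j; lia.
  have pj : (e j).+1 < p := leq_ltn_trans hj (ltn_ord (e' j)).
  right; pose e2 := fun k => if k == i then Ordinal pi else if k == j then Ordinal pj else e k.
  have h2 : (e2 i : nat) = (e i).-1 by rewrite /e2 eqxx.
  have h2j : (e2 j : nat) = (e j).+1 by rewrite /e2 eq_sym (negbTE ij) eqxx.
  have h3 : forall k, k != i -> k != j -> (e k : nat) = e2 k.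
    by move=> k /negbTE ki /negbTE kj; rewrite /e2 ki kj.
  exists e2; split; first exact: (move pp Flin Faff ij hi0 h2 h2j h3).
    have := @sum_upd2 n (fun k => nat_of_ord (e2 k)) (fun k => nat_of_ord (e k)) i j ij (fun k hk hk' => esym (h3 k hk hk')).
    move: eq; rewrite /l1norm /=; lia.
  have := @sum_upd2 n (fun k => (e2 k - e' k) + (e' k - e2 k)) (fun k => (e k - e' k) + (e' k - e k)) i j ij
    (fun k hk hk' => ltac:(by rewrite /= -(h3 k hk hk'))).
  rewrite /mu /=; lia.
case: (pickP (fun k => e k < e' k)) => [j /= hj | none2].
  have : l1norm e < l1norm e'.
    apply: (@sum_lt n (fun k => nat_of_ord (e k)) (fun k => nat_of_ord (e' k)) j) => // k.
    by move: (none k) => /= /negbT; rewrite -leqNgt.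
  lia.
left => k; move: (none k) (none2 k) => /= /negbT n1 /negbT n2.
rewrite -leqNgt in n1; rewrite -leqNgt in n2; lia.
Qed.

Lemma reach (p n : nat) (pp : prime p) (F : fn p n -> Prop)
  (Flin : linear_family F) (Faff : affine_invariant F) :
  forall N (e e' : 'I_n -> 'I_p), mu e e' <= N -> F (monomial e) ->
  l1norm e' <= l1norm e -> F (monomial e').
Proof.
elim => [|N IH] e e' hmu Fe hl;
  case: (step pp Flin Faff Fe hl) => [heq | [e2 [F2 l2 m2]]].
- have <- // : monomial e = monomial e'.
  by apply: functional_extensionality => x; apply: eq_bigr => k _; rewrite heq.
- lia.
- have <- // : monomial e = monomial e'.
  by apply: functional_extensionality => x; apply: eq_bigr => k _; rewrite heq.
- apply: (IH e2 e') => //; lia.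
Qed.

Theorem lemma3p1 (p n : nat) (pp : prime p) (F : fn p n -> Prop)
  (Flin : linear_family F) (Faff : affine_invariant F)
  (e : 'I_n -> 'I_p) (he : F (monomial e)) :
  forall e' : 'I_n -> 'I_p, (l1norm e' <= l1norm e)%N -> F (monomial e').
Proof.
move=> e' h; exact: (reach pp Flin Faff (leqnn (mu e e')) he h).
Qed.
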